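(* Let $(X,d)$ be a compact metric space without isolated points and let $f_{1,\infty}=\{f_n\}$ be a sequence of continuous maps $f_n:X\to X$ converging uniformly to $f$. If $(X,f_{1,\infty})$ is multi-transitive and the set of periodic points of $f_{1,\infty}$ is dense in $X$, then $(X,f_{1,\infty})$ is $\mathcal{N}$-sensitive.
   Context: Write $f_i^n=f_{n+i-1}\circ\cdots\circ f_i$, $f_i^0=\mathrm{id}$. A point $x$ is periodic for $f_{1,\infty}$ if there is $N\in\mathbb{N}$ with $f_1^{nN}(x)=x$ for every $n\in\mathbb{N}$. The system is multi-transitive if for every $m\in\mathbb{N}$ and all nonempty open $U_1,\dots,U_m,V_1,\dots,V_m\subseteq X$ there is $k\in\mathbb{N}$ with $f_1^{ik}(U_i)\cap V_i\ne\varnothing$ for each $i=1,\dots,m$. $f_{1,\infty}^{[k]}=\{f^k_{k(n-1)+1}\}_{n=1}^\infty$ (its $n$-fold composition from index $1$ is $f_1^{kn}$), and $N_{f_{1,\infty}}(V,\delta)=\{n\in\mathbb{N}:\exists u,v\in V,\ d(f_1^n(u),f_1^n(v))>\delta\}$. The system is $\mathcal{N}$-sensitive if for every $r\in\mathbb{N}$ there is $\delta>0$ such that $\bigcap_{i=1}^r N_{f_{1,\infty}^{[i]}}(U_i,\delta)\ne\varnothing$ for all nonempty open $U_1,\dots,U_r\subseteq X$. *)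

(* Defs.v *)
From HB Require Import structures.
From mathcomp Require Import all_boot all_order all_algebra.
From mathcomp Require Import all_classical all_reals all_analysis.
Set Implicit Arguments. Unset Strict Implicit. Unset Printing Implicit Defensive.
Import Order.TTheory GRing.Theory Num.Theory.
Local Open Scope classical_set_scope.
Local Open Scope ring_scope.

(* Sequences are indexed from 1: f 1, f 2, ...  (f 0 is never used). *)

(* fcomp f i n = f_i^n = f_(n+i-1) o ... o f_i,  fcomp f i 0 = id *)
Fixpoint fcomp {X : Type} (f : nat -> X -> X) (i n : nat) : X -> X :=
  match n with
  | 0 => id
  | m.+1 => fun x => f (m + i)%N (fcomp f i m x)
  end.

Definition fblock {X : Type} (f : nat -> X -> X) (k : nat) : nat -> X -> X :=
  fun n => fcomp f (k * (n - 1) + 1)%N k.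

Definition periodic_pt {X : Type} (f : nat -> X -> X) (x : X) : Prop :=
  exists N : nat, (0 < N)%N /\ forall n : nat, (0 < n)%N -> fcomp f 1 (n * N) x = x.

Definition multi_transitive {X : topologicalType} (f : nat -> X -> X) : Prop :=
  forall (m : nat) (U V : nat -> set X), (0 < m)%N ->
    (forall i, (1 <= i <= m)%N -> open (U i) /\ U i !=set0 /\ open (V i) /\ V i !=set0) ->
    exists k : nat, (0 < k)%N /\
      forall i, (1 <= i <= m)%N -> (fcomp f 1 (i * k) @` U i) `&` V i !=set0.

Definition Nset {R : realType} {X : metricType R} (f : nat -> X -> X) (V : set X)
  (delta : R) : set nat :=
  [set n | (0 < n)%N /\ exists u v, V u /\ V v /\ delta < mdist (fcomp f 1 n u) (fcomp f 1 n v)].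

Definition N_sensitive {R : realType} {X : metricType R} (f : nat -> X -> X) : Prop :=
  forall r : nat, (0 < r)%N -> exists delta : R, 0 < delta /\
    forall U : nat -> set X, (forall i, (1 <= i <= r)%N -> open (U i) /\ U i !=set0) ->
      exists n : nat, forall i, (1 <= i <= r)%N -> Nset (fblock f i) (U i) delta n.

(* Main.v *)
Require Import Defs.
From HB Require Import structures.
From mathcomp Require Import all_boot all_order all_algebra.
From mathcomp Require Import all_classical all_reals all_analysis.
Import Order.TTheory GRing.Theory Num.Theory.
Local Open Scope classical_set_scope.
Local Open Scope ring_scope.
From Stdlib Require Import Lia.
From mathcomp Require Import zify lra.

Lemma fcomp_add {Y : Type} (f : nat -> Y -> Y) a b x :
  fcomp f (b + 1) a (fcomp f 1 b x) = fcomp f 1 (a + b) x.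
Proof. by elim: a => [|a IH] //=; rewrite IH addnA. Qed.

Lemma fblockE {Y : Type} (f : nat -> Y -> Y) i n x :
  fcomp (fblock f i) 1 n x = fcomp f 1 (i * n) x.
Proof.
elim: n => [|n IH]; first by rewrite muln0.
rewrite /= IH /fblock.
rewrite addnK.
rewrite fcomp_add; congr fcomp; lia.
Qed.

Lemma open_ball_sub (R : realType) (X : metricType R) (a : X) (e : R) : 0 < e ->
  exists V : set X, [/\ open V, V a & V `<=` [set y | mdist a y < e]].
Proof.
move=> e0; exists (ball a (PosNum e0)%:num)°.
have [Ho Hc] := open_nbhs_ball a (PosNum e0).
split => //; move=> y /interior_subset; by rewrite ballEmdist.
Qed.
Theorem mainTheorem9 (R : realType) (X : metricType R)
  (f : nat -> X -> X) (g : X -> X) :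
  compact [set: X] ->
  (forall x : X, limit_point [set: X] x) ->
  (forall n : nat, (0 < n)%N -> continuous (f n)) ->
  (forall e : R, 0 < e -> exists N : nat, forall n : nat, (N <= n)%N ->
       forall x : X, mdist (f n x) (g x) < e) ->
  multi_transitive f ->
  dense [set x : X | periodic_pt f x] ->
  N_sensitive f.
Proof.
move=> _ Hlim _ _ Hmt Hden r r0.
have [[a _]|nX] := pselect (exists a : X, True); last first.
  exists 1; split => // U HU; exfalso.
  have [_ [x _]] := HU 1%N ltac:(lia); exact: nX (ex_intro _ x I).
have [b [ba _ _]] := Hlim a setT filterT.
set D := mdist a b.
have D0 : 0 < D by rewrite /D mdist_gt0 eq_sym.
exists (D / 8); split; first by lra.
move=> U HU.
have : forall i, exists pN : X * nat, (0 < pN.2)%N /\ ((1 <= i <= r)%N ->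
   U i pN.1 /\ forall n, (0 < n)%N -> fcomp f 1 (n * pN.2) pN.1 = pN.1).
  move=> i; have [Hi|Hi] := boolP (1 <= i <= r)%N; last by exists (a, 1%N).
  have [Uo Un] := HU i Hi.
  have [p [Up [N [N0 HN]]]] := Hden (U i) Un Uo.
  by exists (p, N).
move=> /choice [pN HpN].
pose p i := (pN i).1; pose N i := (pN i).2.
pose M := (\prod_(j < r.+1) N j)%N.
have M0 : (0 < M)%N by apply: prodn_gt0 => j; exact: (HpN j).1.
have NM : forall i, (i <= r)%N -> (N i %| M)%N.
  move=> i ir; have ir' : (i < r.+1)%N by [].
  by rewrite /M (bigD1 (Ordinal ir'))//= dvdn_mulr.
pose c i := if D / 2 <= mdist (p i) a then a else b.
have Hc : forall i, D / 2 <= mdist (p i) (c i).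
  move=> i; rewrite /c; case: ifP => // /negbT; rewrite -ltNge => H.
  have := metric_triangle a (p i) b; rewrite -/D metric_sym; lra.
pose W i := (ball (c i) (D / 8))°.
have HW : forall i, open (W i) /\ W i !=set0 /\ W i `<=` [set y | mdist (c i) y < D / 8].
  move=> i; have D8 : 0 < D / 8 by lra.
  have [Ho Hc'] := open_nbhs_ball (c i) (PosNum D8).
  split => //; split; first by exists (c i).
  by move=> y /interior_subset; rewrite ballEmdist.
pose Uj j := if (M %| j)%N then U (j %/ M)%N else setT.
pose Vj j := if (M %| j)%N then W (j %/ M)%N else setT.
have HUV : forall j, (1 <= j <= r * M)%N ->
    open (Uj j) /\ Uj j !=set0 /\ open (Vj j) /\ Vj j !=set0.
  move=> j Hj; rewrite /Uj /Vj; case: ifP => [Mj|_]; last first.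
    by do !split => //; [exact: openT|exists a|exact: openT|exists a].
  have Hq : (1 <= j %/ M <= r)%N.
    move: Hj; move/dvdnP: Mj => [q ->]; rewrite mulnK //; nia.
  have [Uo Un] := HU _ Hq; have [Wo [Wn _]] := HW (j %/ M)%N.
  by do !split.
have [k [k0 Hk]] := Hmt (r * M)%N Uj Vj ltac:(lia) HUV.
exists (M * k)%N => i Hi.
have Hij : (1 <= i * M <= r * M)%N by nia.
have := Hk _ Hij; rewrite /Uj /Vj dvdn_mull // mulnK //.
move=> [y [[u Uu <-] Wy]].
split; first by rewrite muln_gt0 M0.
have [_ Up] := HpN i.
have Hi' : (i <= r)%N by case/andP: Hi.
exists u, (p i); split => //; split; first exact: (Up Hi).1.
rewrite !fblockE.
have -> : fcomp f 1 (i * (M * k)) (p i) = p i.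
  move/dvdnP: (NM i Hi') => [t Ht].
  have -> : (i * (M * k) = (i * t * k) * N i)%N by rewrite Ht; lia.
  apply: (Up Hi).2; rewrite !muln_gt0; apply/andP; split; last by [].
  apply/andP; split; first by case/andP: Hi.
  by move: M0; rewrite Ht muln_gt0 => /andP[].
rewrite mulnA.
have := (HW i).2.2 _ Wy; rewrite /=.
have := Hc i; have := metric_triangle (p i) (fcomp f 1 (i * M * k) u) (c i).
rewrite (metric_sym (fcomp f 1 _ u) (c i)) (metric_sym (p i) (fcomp f 1 _ u)).
lra.
Qed.
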